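(* In the Cournot game described in the context, suppose each $J^i$ is twice continuously differentiable and $p(\sigma)=-D\sigma+d$ with $D\in\mathbb{R}^{V\times V}$, $D\succeq0$, $d\in\mathbb{R}^V$. If the communication matrix $T$ is symmetric ($T=T^\top$), then for every even $\nu\in\mathbb{N}$ the operator $F_\nu(x)=[\nabla_{x^i}J^i(x^i,\sigma^i_\nu(x))]_{i=1}^N$ is strongly monotone on $\mathcal{X}$.
   Context: Cournot game: $N$ firms, $V$ markets (nodes of a directed transportation network with $E$ edges and incidence matrix $B\in\{0,1,-1\}^{V\times E}$). Firm $i$ produces at location $\ell_i$; its strategy is $x^i=[t^i;r^i]\in\mathbb{R}^{E+1}_{\ge0}$ ($t^i_e$ transported on edge $e$, $r^i$ total production); sales $y^i=H^ix^i$ with $H^i=[B,e_{\ell_i}]\in\mathbb{R}^{V\times(E+1)}$. Individual constraint $\mathcal{X}^i=\{x^i\in\mathbb{R}^{E+1}_{\ge0}:x^i\le\bar r^i\mathbf{1}_{E+1},\ H^ix^i\ge0\}$, $\bar r^i>0$; $\mathcal{X}=\mathcal{X}^1\times\dots\times\mathcal{X}^N$. Costs $c^i_e(t)=\beta^i_et-\gamma^i_e(t)$, $a^i(r)=\beta^i_ar-\gamma^i_a(r)$, each $\gamma$ strongly concave, increasing, with maximum derivative smaller than the corresponding $\beta$. $J^i(z_1,z_2)=a^i(r^i)+\sum_ec^i_e(t^i_e)-p(z_2)^\top H^iz_1$, $z_1=x^i$. Communication matrix $T\in[0,1]^{N\times N}$, primitive and doubly stochastic. Local aggregate $\sigma^i_\nu(x)=\sum_j[T^\nu]_{ij}H^jx^j$;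 $\nabla_{x^i}J^i(x^i,\sigma^i_\nu(x))$ is the gradient of $x^i\mapsto J^i(x^i,[T^\nu]_{ii}H^ix^i+\sum_{j\ne i}[T^\nu]_{ij}H^jx^j)$. $D\succeq0$ means $z^\top Dz\ge0$ for all $z$. Strongly monotone: exists $\alpha>0$ with $(F(x)-F(y))^\top(x-y)\ge\alpha\|x-y\|^2$ for all $x,y\in\mathcal{X}$. *)

(* Defs.v *)
From HB Require Import structures.
From mathcomp Require Import all_boot all_order all_algebra.
From mathcomp Require Import all_classical all_reals all_analysis.
Set Implicit Arguments. Unset Strict Implicit. Unset Printing Implicit Defensive.
Import Order.TTheory GRing.Theory Num.Theory.
Import numFieldNormedType.Exports.
Local Open Scope ring_scope.

Definition is_incidence (R : realType) (V E : nat) (B : 'M[R]_(V, E)) : Prop :=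
  forall e : 'I_E, exists u v : 'I_V,
    u != v /\ forall w : 'I_V, B w e = (w == v)%:R - (w == u)%:R.

Definition Hmat (R : realType) (V E : nat) (B : 'M[R]_(V, E)) (l : 'I_V)
  : 'M[R]_(V, E + 1) := row_mx B (delta_mx l (ord0 : 'I_1)).

Definition tcomp (R : realType) (E : nat) (x : 'cV[R]_(E + 1)) (e : 'I_E) : R :=
  x (lshift 1 e) ord0.
Definition rcomp (R : realType) (E : nat) (x : 'cV[R]_(E + 1)) : R :=
  x (rshift E (ord0 : 'I_1)) ord0.

Definition Jcost (R : realType) (V E : nat) (B : 'M[R]_(V, E)) (l : 'I_V)
  (betaA : R) (gammaA : R -> R) (betaE : 'I_E -> R) (gammaE : 'I_E -> R -> R)
  (p : 'cV[R]_V -> 'cV[R]_V) (z1 : 'cV[R]_(E + 1)) (z2 : 'cV[R]_V) : R :=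
  (betaA * rcomp z1 - gammaA (rcomp z1))
  + \sum_(e < E) (betaE e * tcomp z1 e - gammaE e (tcomp z1 e))
  - ((p z2)^T *m (Hmat B l *m z1)) ord0 ord0.

Definition grad (R : realType) (n : nat) (f : 'cV[R]_n -> R) (z : 'cV[R]_n)
  : 'cV[R]_n :=
  \col_k (derive1 (fun s : R => f (z + s *: delta_mx k (ord0 : 'I_1))) 0).

Definition local_obj (R : realType) (N V m : nat)
  (J : 'I_N -> 'cV[R]_m -> 'cV[R]_V -> R) (H : 'I_N -> 'M[R]_(V, m))
  (Tn : 'M[R]_N) (x : 'I_N -> 'cV[R]_m) (i : 'I_N) : 'cV[R]_m -> R :=
  fun z => J i z (Tn i i *: (H i *m z)
                  + \sum_(j < N | j != i) Tn i j *: (H j *m x j)).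

Definition Fop (R : realType) (N V m : nat)
  (J : 'I_N -> 'cV[R]_m -> 'cV[R]_V -> R) (H : 'I_N -> 'M[R]_(V, m))
  (Tn : 'M[R]_N) (x : 'I_N -> 'cV[R]_m) : 'I_N -> 'cV[R]_m :=
  fun i => grad (local_obj J H Tn x i) (x i).

Definition feasible (R : realType) (N V m : nat) (H : 'I_N -> 'M[R]_(V, m))
  (rbar : 'I_N -> R) (x : 'I_N -> 'cV[R]_m) : Prop :=
  forall i, (forall k, 0 <= x i k ord0 /\ x i k ord0 <= rbar i)
            /\ (forall v, 0 <= (H i *m x i) v ord0).

Definition strongly_monotone_on (R : realType) (N m : nat)
  (F : ('I_N -> 'cV[R]_m) -> ('I_N -> 'cV[R]_m))
  (X : ('I_N -> 'cV[R]_m) -> Prop) : Prop :=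
  exists2 alpha : R, 0 < alpha &
    forall x y, X x -> X y ->
      alpha * (\sum_(i < N) \sum_(k < m) (x i k ord0 - y i k ord0) ^+ 2)
      <= \sum_(i < N) ((F x i - F y i)^T *m (x i - y i)) ord0 ord0.

Definition twice_cont_diff (R : realType) (g : R -> R) : Prop :=
  (forall t, derivable g t 1) /\ (forall t, derivable (derive1 g) t 1)
  /\ continuous (derive1 (derive1 g)).

Definition strongly_concave_on (R : realType) (g : R -> R) (a b : R) : Prop :=
  exists2 mu : R, 0 < mu &
    forall x y l, a <= x <= b -> a <= y <= b -> 0 <= l <= 1 ->
      l * g x + (1 - l) * g y + mu / 2 * l * (1 - l) * (x - y) ^+ 2
      <= g (l * x + (1 - l) * y).

Definition cost_ok (R : realType) (beta : R) (g : R -> R) (rb : R) : Prop :=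
  [/\ twice_cont_diff g,
      strongly_concave_on g 0 rb,
      (forall s t, 0 <= s -> s < t -> t <= rb -> g s < g t)
    & (forall t, 0 <= t <= rb -> derive1 g t < beta)].

Definition doubly_stochastic (R : realType) (N : nat) (T : 'M[R]_N) : Prop :=
  [/\ forall i j, 0 <= T i j <= 1,
      forall i, \sum_j T i j = 1
    & forall j, \sum_i T i j = 1].

Definition primitive_mx (R : realType) (N : nat) (T : 'M[R]_N) : Prop :=
  (forall i j, 0 <= T i j) /\ exists k : nat, forall i j, 0 < (T ^+ k) i j.

Definition psd (R : realType) (V : nat) (D : 'M[R]_V) : Prop :=
  forall z : 'cV[R]_V, 0 <= (z^T *m D *m z) ord0 ord0.

(* Main.v *)
Require Import Defs.
From HB Require Import structures.
From mathcomp Require Import all_boot all_order all_algebra.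
From mathcomp Require Import all_classical all_reals all_analysis.
From mathcomp Require Import ring lra.
Import Order.TTheory GRing.Theory Num.Theory.
Import numFieldNormedType.Exports.
Local Open Scope ring_scope.
Local Open Scope classical_set_scope.

Section S.
Variable R : realType.

Lemma is_derive_lin (a c : R) : is_derive (0:R) 1 (fun s : R => a + s * c) c.
Proof.
have := @is_deriveD R R R (cst a) (fun s => s * c) 0 1 0 c.
rewrite add0r; apply.
have := @is_deriveM R R (@id R) (cst c) 0 1 1 0.
rewrite /= scaler0 add0r /GRing.scale /= mulr1.
by apply.
Qed.

Lemma is_derive_aff (g : R -> R) (a c : R) : derivable g a 1 ->
  is_derive (0:R) 1 (fun s => g (a + s * c)) (c * derive1 g a).
Proof.
move=> dg.
have hd : derivable (fun s : R => a + s * c) 0 1 by apply: ex_derive.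
have ha : a + 0 * c = a by rewrite mul0r addr0.
have dg' : derivable g (a + 0 * c) 1 by rewrite ha.
apply: DeriveDef.
  apply/derivable1_diffP; apply: (@differentiable_comp _ _ _ _ (fun s : R => a + s * c) g).
    by apply/derivable1_diffP.
  by apply/derivable1_diffP.
rewrite -derive1E.
have := derive1_comp hd dg'.
rewrite /comp => ->.
rewrite ha derive1E [in X in _ * X]derive1E (@derive_val _ _ _ _ _ _ _ (is_derive_lin a c)) mulrC //.
Qed.

Lemma sc_tangent (g : R -> R) a b mu x y : 0 < mu ->
 (forall x y l, a <= x <= b -> a <= y <= b -> 0 <= l <= 1 ->
   l * g x + (1 - l) * g y + mu / 2 * l * (1 - l) * (x - y) ^+ 2 <= g (l * x + (1 - l) * y)) ->
 derivable g x 1 -> a <= x <= b -> a <= y <= b ->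
 g y - g x + mu / 2 * (y - x) ^+ 2 <= (y - x) * derive1 g x.
Proof.
move=> mu0 sc dg xab yab.
have dv : derivable g x (y - x).
  by apply: diff_derivable; apply/derivable1_diffP.
have eD : 'D_(y - x) g x = (y - x) * derive1 g x.
  rewrite deriveE; last by apply/derivable1_diffP.
  by rewrite (deriv1E dg).
set psi := fun h : R => h^-1 *: ((g \o shift x) (h *: (y - x)) - g x).
have cpsi : psi @ 0^' --> 'D_(y - x) g x by exact: dv.
have cpsir : psi @ 0^'+ --> 'D_(y - x) g x.
  apply: cvg_trans cpsi; apply: cvg_app; apply: within_subset => u /=.
  by rewrite lt_def => /andP [].
have eL : lim (psi @ 0^'+) = (y - x) * derive1 g x by rewrite -eD; apply: cvg_lim.
rewrite -eL.
set K := mu / 2 * (y - x) ^+ 2.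
have K0 : 0 <= K by rewrite /K mulr_ge0 // ?sqr_ge0 // divr_ge0 // ltW.
apply/ler_addgt0Pr => e e0.
rewrite -lerBlDr.
apply: limr_ge; first by apply/cvg_ex; exists ('D_(y - x) g x).
set t := e / (K + e).
have t0 : 0 < t by rewrite divr_gt0 // ltr_wpDl.
have t1 : t <= 1 by rewrite ler_pdivrMr ?mul1r ?lerDr // ltr_wpDl.
have tK : t * K <= e.
  rewrite /t mulrAC ler_pdivrMr ?ltr_wpDl // mulrDr; nra.
near=> h.
have h0 : 0 < h by near: h; exact: nbhs_right_gt.
have ht : h < t by near: h; exact: nbhs_right_lt.
have h1 : h <= 1 by apply: ltW; apply: lt_le_trans ht t1.
have := sc y x h yab xab.
rewrite (ltW h0) h1 => /(_ isT).
have -> : h * y + (1 - h) * x = h *: (y - x) + x by rewrite /GRing.scale /=; ring.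
rewrite /psi /= => H.
rewrite /GRing.scale /= ler_pdivlMl //.
have hK : h * K <= e by apply: le_trans tK; apply: ler_wpM2r => //; apply: ltW.
move: H; rewrite -/K.
have -> : mu / 2 * h * (1 - h) * (y - x) ^+ 2 = h * K - h * (h * K) by rewrite /K; ring.
move=> H.
have : h * (h * K) <= h * e by apply: ler_wpM2l => //; apply: ltW.
nra.
Unshelve. all: by end_near.
Qed.

Lemma is_derive_quad (a b c : R) : is_derive (0:R) 1 (fun s : R => a + s * (b + s * c)) b.
Proof.
have := @is_deriveD R R R (cst a) (fun s => s * (b + s * c)) 0 1 0 b.
rewrite add0r; apply.
have := @is_deriveM R R (@id R) (fun s => b + s * c) 0 1 1 c.
rewrite /= mul0r addr0 /GRing.scale /= mulr1 mul0r add0r.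
by apply => //; exact: is_derive_lin.
Qed.

Lemma entry_delta (V n : nat) (a : 'cV[R]_V) (M : 'M[R]_(V, n)) k :
  (a^T *m (M *m delta_mx k (0 : 'I_1))) 0 0 = (M^T *m a) k 0.
Proof. 
rewrite mulmxA -colE !mxE; apply: eq_bigr => j _; rewrite !mxE mulrC //.
Qed.

Lemma scal_tr (V : nat) (u v : 'cV[R]_V) : (u^T *m v) 0 0 = (v^T *m u) 0 0.
Proof. rewrite -[v^T *m u]trmxK trmx_mul trmxK; rewrite [in RHS]mxE //. Qed.

Section Grad.
Variables (n V : nat) (H : 'M[R]_(V, n)) (bet : 'I_n -> R) (gam : 'I_n -> R -> R)
  (t : R) (S : 'cV[R]_V) (D : 'M[R]_V) (d : 'cV[R]_V).

Definition fobj (z : 'cV[R]_n) : R :=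
  \sum_k (bet k * z k 0 - gam k (z k 0))
  - ((-(D *m (t *: (H *m z) + S)) + d)^T *m (H *m z)) 0 0.

Lemma grad_fobj z : (forall k a, derivable (gam k) a 1) ->
  grad fobj z = \col_k (bet k - derive1 (gam k) (z k 0))
     + t *: (H^T *m (D^T *m (H *m z))) + H^T *m (D *m (t *: (H *m z) + S) - d).
Proof.
move=> dg.
apply/matrixP => k j; rewrite (ord1 j) {j}.
rewrite /grad mxE.
set e := delta_mx k (0 : 'I_1).
set P0 := -(D *m (t *: (H *m z) + S)) + d.
set P1 := -(t *: (D *m (H *m e))).
set V0 := H *m z.
set V1 := H *m e.
set q0 := (P0^T *m V0) 0 0.
set q1 := (P1^T *m V0) 0 0 + (P0^T *m V1) 0 0.
set q2 := (P1^T *m V1) 0 0.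
have phiD : forall (j : 'I_n) (a : R), is_derive a 1 (fun u => bet j * u - gam j u) (bet j - derive1 (gam j) a).
  move=> j a.
  have := @is_deriveB R R R (fun u => bet j * u) (gam j) a 1 (bet j) (derive1 (gam j) a).
  apply.
    have := @is_deriveM R R (cst (bet j)) (@id R) a 1 0 1.
    by rewrite /= scaler0 addr0 /GRing.scale /= mulr1; apply.
  by rewrite derive1E; apply: derivableP.
have dphi : forall (j : 'I_n) (a : R), derivable (fun u => bet j * u - gam j u) a 1.
  by move=> j a; case: (phiD j a).
have -> : (fun s : R => fobj (z + s *: e)) =
   (\sum_j (fun s => bet j * (z j 0 + s * e j 0) - gam j (z j 0 + s * e j 0)))
   - (fun s => q0 + s * (q1 + s * q2)).
  apply/funext => s; rewrite fct_sumE /fobj /=; congr (_ - _).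
    by apply: eq_bigr => j _; rewrite !mxE.
  have -> : -(D *m (t *: (H *m (z + s *: e)) + S)) + d = P0 + s *: P1.
    rewrite /P0 /P1.
    rewrite ?mulmxDr -?scalemxAr ?scalerDr ?mulmxDr -?scalemxAr ?scalerDr ?mulmxDr -?scalemxAr.
    set A := D *m (H *m z); set B := D *m (H *m e); set C := D *m S.
    apply/matrixP => a b; rewrite !mxE; ring.
  have -> : H *m (z + s *: e) = V0 + s *: V1 by rewrite mulmxDr -scalemxAr.
  rewrite linearD /= linearZ /=.
  rewrite [(P0 + _)^T]linearD /= [(s *: P1)^T]linearZ /= !mulmxDl -!scalemxAl.
  rewrite /q0 /q1 /q2.
  set a1 := P0^T *m V0; set a2 := P1^T *m V0; set a3 := P0^T *m V1; set a4 := P1^T *m V1.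
  rewrite !mxE.
  rewrite /q1; ring.
rewrite derive1E.
have := @is_deriveB R R R _ _ 0 1 _ _ (@is_derive_sum R R R n _ 0 1 _ (fun j => is_derive_aff _ _ (e j 0) (dphi j (z j 0)))) (is_derive_quad q0 q1 q2).
move=> hd; rewrite (@derive_val _ _ _ _ _ _ _ hd).
rewrite (bigD1 k) //= big1 ?addr0; last first.
  by move=> i /negbTE ik; rewrite /e mxE ik mul0r.
rewrite /e mxE !eqxx mul1r derive1E (@derive_val _ _ _ _ _ _ _ (phiD k (z k 0))).
set M1 := H^T *m (D^T *m V0).
set M2 := H^T *m (D *m (t *: V0 + S) - d).
have hX : ((D *m V1)^T *m V0) 0 0 = M1 k 0.
  by rewrite scal_tr /V1 [D *m _]mulmxA /e entry_delta /M1 trmx_mul -mulmxA.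
have hP0 : H^T *m P0 = - M2.
  by rewrite /M2 /P0 /V0 [LHS]mulmxDr mulmxDr !mulmxN opprD opprK.
have e2 : (P0^T *m V1) 0 0 = - M2 k 0.
  by rewrite /V1 entry_delta hP0 mxE.
have e1 : (P1^T *m V0) 0 0 = - t * M1 k 0.
  rewrite /P1 linearN /= linearZ /= mulNmx -scalemxAl.
  move: hX; move: ((D *m V1)^T *m V0) => X hX.
  by rewrite mxE [(t *: X) 0 0]mxE hX mulNr.
rewrite /q1 e1 e2; clearbody M1 M2; rewrite !mxE; ring.
Qed.
End Grad.

Lemma sc_mono (g : R -> R) a b mu x y : 0 < mu ->
 (forall x y l, a <= x <= b -> a <= y <= b -> 0 <= l <= 1 ->
   l * g x + (1 - l) * g y + mu / 2 * l * (1 - l) * (x - y) ^+ 2 <= g (l * x + (1 - l) * y)) ->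
 derivable g x 1 -> derivable g y 1 -> a <= x <= b -> a <= y <= b ->
 mu * (x - y) ^+ 2 <= (derive1 g y - derive1 g x) * (x - y).
Proof.
move=> mu0 sc dx dy xab yab.
have h1 := sc_tangent g a b mu x y mu0 sc dx xab yab.
have h2 := sc_tangent g a b mu y x mu0 sc dy yab xab.
have e1 : (y - x) ^+ 2 = (x - y) ^+ 2 by rewrite -sqrrN opprB.
rewrite e1 in h1.
have : mu * (x - y) ^+ 2 = mu / 2 * (x - y) ^+ 2 + mu / 2 * (x - y) ^+ 2.
  by rewrite -mulrDl -splitr.
move=> ->.
have -> : (derive1 g y - derive1 g x) * (x - y) = (y - x) * derive1 g x + (x - y) * derive1 g y by ring.
lra.
Qed.

End S.

Lemma bil_sumr (R : realType) (V N : nat) (D : 'M[R]_V) (u : 'cV[R]_V) (a : 'I_N -> R) (v : 'I_N -> 'cV[R]_V) :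
  (u^T *m (D *m (\sum_j a j *: v j))) 0 0 = \sum_j a j * (u^T *m (D *m v j)) 0 0.
Proof.
rewrite !mulmx_sumr summxE; apply: eq_bigr => j _.
by rewrite -!scalemxAr mxE.
Qed.

Lemma bil_suml (R : realType) (V N : nat) (D : 'M[R]_V) (v : 'cV[R]_V) (a : 'I_N -> R) (u : 'I_N -> 'cV[R]_V) :
  ((\sum_i a i *: u i)^T *m (D *m v)) 0 0 = \sum_i a i * ((u i)^T *m (D *m v)) 0 0.
Proof.
rewrite linear_sum /= mulmx_suml summxE; apply: eq_bigr => j _.
by rewrite linearZ /= -!scalemxAl mxE.
Qed.

Lemma trmx_expS (R : realType) (N : nat) (A : 'M[R]_N) k : A^T = A -> (A ^+ k)^T = A ^+ k.
Proof.
move=> sA; elim: k => [|k IH].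
  by rewrite expr0; apply/matrixP => i j; rewrite !mxE eq_sym.
rewrite exprS; change ((A *m A ^+ k)^T = A *m A ^+ k).
by rewrite trmx_mul IH sA !mulmxE -exprSr exprS.
Qed.


Lemma diff_aux (R : realType) (n V : nat) (cx cy : 'cV[R]_n) (t : R) (Hm : 'M[R]_(V, n))
  (D : 'M[R]_V) (d : 'cV[R]_V) (zx zy : 'cV[R]_n) (Sx Sy : 'cV[R]_V) :
  (cx + t *: (Hm^T *m (D^T *m (Hm *m zx))) + Hm^T *m (D *m (t *: (Hm *m zx) + Sx) - d))
  - (cy + t *: (Hm^T *m (D^T *m (Hm *m zy))) + Hm^T *m (D *m (t *: (Hm *m zy) + Sy) - d))
  = (cx - cy) + t *: (Hm^T *m (D^T *m (Hm *m (zx - zy))))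
    + Hm^T *m (D *m ((t *: (Hm *m zx) + Sx) - (t *: (Hm *m zy) + Sy))).
Proof.
rewrite !mulmxBr.
move: (Hm^T *m (D^T *m (Hm *m zx))) (Hm^T *m (D^T *m (Hm *m zy))) => A1 A2.
move: (Hm^T *m (D *m (t *: (Hm *m zx) + Sx))) (Hm^T *m (D *m (t *: (Hm *m zy) + Sy))) => B1 B2.
move: (Hm^T *m d) => C.
apply/matrixP => a b; rewrite !mxE; ring.
Qed.

Lemma prod_aux (R : realType) (n : nat) (c P Q w : 'cV[R]_n) (t : R) :
  ((c + t *: P + Q)^T *m w) 0 0 = (c^T *m w) 0 0 + t * (P^T *m w) 0 0 + (Q^T *m w) 0 0.
Proof.
rewrite !linearD /= linearZ /= !mulmxDl -scalemxAl.
move: (c^T *m w) (P^T *m w) (Q^T *m w) => A1 A2 A3.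
by rewrite !mxE.
Qed.

Lemma quad_aux1 (R : realType) (n V : nat) (Hm : 'M[R]_(V, n)) (D : 'M[R]_V) (z : 'cV[R]_n) :
  ((Hm^T *m (D^T *m (Hm *m z)))^T *m z) 0 0 = ((Hm *m z)^T *m (D *m (Hm *m z))) 0 0.
Proof. by rewrite !trmx_mul !trmxK !mulmxA. Qed.

Lemma quad_aux2 (R : realType) (n V : nat) (Hm : 'M[R]_(V, n)) (D : 'M[R]_V) (z : 'cV[R]_n) (s : 'cV[R]_V) :
  ((Hm^T *m (D *m s))^T *m z) 0 0 = ((Hm *m z)^T *m (D *m s)) 0 0.
Proof. by rewrite scal_tr !trmx_mul !mulmxA. Qed.

Theorem lemma4 (R : realType) (N V E : nat) (B : 'M[R]_(V, E))
  (loc : 'I_N -> 'I_V) (rbar : 'I_N -> R)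
  (betaA : 'I_N -> R) (gammaA : 'I_N -> R -> R)
  (betaE : 'I_N -> 'I_E -> R) (gammaE : 'I_N -> 'I_E -> R -> R)
  (T : 'M[R]_N) (D : 'M[R]_V) (d : 'cV[R]_V) (nu : nat) :
  is_incidence B ->
  (forall i, 0 < rbar i) ->
  (forall i, cost_ok (betaA i) (gammaA i) (rbar i)) ->
  (forall i e, cost_ok (betaE i e) (gammaE i e) (rbar i)) ->
  doubly_stochastic T -> primitive_mx T ->
  psd D ->
  T^T = T ->
  ~~ odd nu ->
  strongly_monotone_on
    (Fop (fun i => Jcost B (loc i) (betaA i) (gammaA i) (betaE i) (gammaE i)
                     (fun s => - (D *m s) + d))
         (fun i => Hmat B (loc i)) (T ^+ nu))
    (feasible (fun i => Hmat B (loc i)) rbar).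
Proof.
move=> _ _ hA hE _ _ psdD Tsym ev.
set Tn := T ^+ nu.
pose H i := Hmat B (loc i).
pose bet i (k : 'I_(E + 1)) := match fintype.split k with inl e => betaE i e | inr _ => betaA i end.
pose gam i (k : 'I_(E + 1)) := match fintype.split k with inl e => gammaE i e | inr _ => gammaA i end.
have gok : forall i k, cost_ok (bet i k) (gam i k) (rbar i).
  by move=> i k; rewrite /bet /gam; case: fintype.split => ?; [apply: hE | apply: hA].
have dgam : forall i k a, derivable (gam i k) a 1.
  by move=> i k a; case: (gok i k) => [[]] + _ _ _ _; apply.
have hmu : forall p : 'I_N * 'I_(E + 1), exists mu : R, 0 < mu /\
    forall a b, 0 <= a <= rbar p.1 -> 0 <= b <= rbar p.1 ->
      mu * (a - b) ^+ 2 <= (derive1 (gam p.1 p.2) b - derive1 (gam p.1 p.2) a) * (a - b).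
  move=> [i k]; case: (gok i k) => _ [mu mu0 sc] _ _; exists mu; split=> // a b ha hb.
  exact: sc_mono mu0 sc (dgam _ _ _) (dgam _ _ _) ha hb.
have [mu Hmu] := choice hmu.
set alpha := (1 + \sum_p (mu p)^-1)^-1.
have sum0 : 0 <= \sum_p (mu p)^-1.
  by apply: sumr_ge0 => p _; rewrite invr_ge0 ltW //; case: (Hmu p).
have alpha0 : 0 < alpha by rewrite invr_gt0 ltr_pwDl.
have alphale : forall p, alpha <= mu p.
  move=> p; have mu0 : 0 < mu p by case: (Hmu p).
  rewrite -[mu p]invrK lef_pV2 ?posrE ?invr_gt0 ?ltr_pwDl //.
  rewrite (bigD1 p) //= addrCA lerDl addr_ge0 //.
  by apply: sumr_ge0 => q _; rewrite invr_ge0 ltW //; case: (Hmu q).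
exists alpha => // x y fx fy.
pose S (z : 'I_N -> 'cV[R]_(E + 1)) i := \sum_(j < N | j != i) Tn i j *: (H j *m z j).
have HF : forall z i, Fop (fun i => Jcost B (loc i) (betaA i) (gammaA i) (betaE i) (gammaE i)
                     (fun s => - (D *m s) + d)) (fun i => Hmat B (loc i)) Tn z i =
   \col_k (bet i k - derive1 (gam i k) (z i k 0)) + Tn i i *: ((H i)^T *m (D^T *m (H i *m z i)))
   + (H i)^T *m (D *m (Tn i i *: (H i *m z i) + S z i) - d).
  move=> z i; rewrite -(@grad_fobj R _ _ (H i) (bet i) (gam i) (Tn i i) (S z i) D d (z i) (dgam i)).
  rewrite /Fop; congr grad; apply/funext => v.
  rewrite /local_obj /Jcost /fobj; congr (_ - _).
  rewrite big_split_ord big_ord1 addrC; congr (_ + _).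
    apply: eq_bigr => e _.
    by rewrite /bet /gam (unsplitK (inl _ e) : fintype.split (lshift 1 e) = inl e).
  by rewrite /bet /gam (unsplitK (inr _ ord0) : fintype.split (rshift E ord0) = inr ord0).
pose u j := H j *m (x j - y j).
pose bf (a b : 'cV[R]_V) := (a^T *m (D *m b)) 0 0.
have key : forall i, ((Fop (fun i => Jcost B (loc i) (betaA i) (gammaA i) (betaE i) (gammaE i)
                     (fun s => - (D *m s) + d)) (fun i => Hmat B (loc i)) Tn x i -
        Fop (fun i => Jcost B (loc i) (betaA i) (gammaA i) (betaE i) (gammaE i)
                     (fun s => - (D *m s) + d)) (fun i => Hmat B (loc i)) Tn y i)^T *m (x i - y i)) 0 0
     = \sum_k (derive1 (gam i k) (y i k 0) - derive1 (gam i k) (x i k 0)) * (x i k 0 - y i k 0)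
       + Tn i i * bf (u i) (u i) + bf (u i) (\sum_j Tn i j *: u j).
  move=> i; rewrite !HF diff_aux prod_aux quad_aux1 quad_aux2.
  have eS : (Tn i i *: (H i *m x i) + S x i) - (Tn i i *: (H i *m y i) + S y i) = \sum_j Tn i j *: u j.
    rewrite [in RHS](bigD1 i) //= /S /u mulmxBr scalerBr opprD addrACA; congr (_ + _).
    by rewrite -sumrB; apply: eq_bigr => j _; rewrite mulmxBr scalerBr.
  rewrite eS; congr (_ + _ + _).
  rewrite mxE; apply: eq_bigr => k _; rewrite !mxE; ring.
have bfpos : forall a, 0 <= bf a a by move=> a; rewrite /bf mulmxA; apply: psdD.
set m := nu./2.
set M := T ^+ m.
have MT : M^T = M by apply: trmx_expS.
have Msym : forall i k, M i k = M k i by move=> i k; rewrite -[in LHS]MT mxE.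
have enu : nu = (m * 2)%N.
  by rewrite muln2 -{1}(odd_double_half nu) (negbTE ev) add0n.
have TnE : forall i j, Tn i j = \sum_k M k i * M k j.
  move=> i j; rewrite /Tn enu exprM expr2 -mulmxE mxE.
  by apply: eq_bigr => k _; rewrite Msym.
rewrite (eq_bigr _ (fun i _ => key i)) !big_split /=.
apply: le_trans (_ : _ <= \sum_i \sum_k (derive1 (gam i k) (y i k 0) - derive1 (gam i k) (x i k 0)) * (x i k 0 - y i k 0)) _.
  rewrite mulr_sumr; apply: ler_sum => i _; rewrite mulr_sumr; apply: ler_sum => k _.
  have [mu0 hm] := Hmu (i, k).
  have hx := (proj1 (fx i)) k; have hy := (proj1 (fy i)) k.
  apply: le_trans (hm _ _ _ _); last by apply/andP; exact: hy.
    by rewrite ler_wpM2r ?sqr_ge0 // (alphale (i, k)).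
  by apply/andP; exact: hx.
rewrite -addrA lerDl addr_ge0 //.
  apply: sumr_ge0 => i _; apply: mulr_ge0 => //.
  by rewrite TnE; apply: sumr_ge0 => k _; rewrite -expr2 sqr_ge0.
have -> : \sum_i bf (u i) (\sum_j Tn i j *: u j) = \sum_k bf (\sum_i M k i *: u i) (\sum_j M k j *: u j).
  rewrite /bf.
  under eq_bigr => i _ do rewrite bil_sumr.
  under [RHS]eq_bigr => k _ do rewrite bil_suml.
  rewrite [RHS]exchange_big /=; apply: eq_bigr => i _.
  under [RHS]eq_bigr => k _ do rewrite bil_sumr mulr_sumr.
  rewrite [RHS]exchange_big /=; apply: eq_bigr => j _.
  by rewrite TnE mulr_suml; apply: eq_bigr => k _; rewrite mulrA.
by apply: sumr_ge0 => k _; apply: bfpos.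
Qed.
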